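(* Let $n\ge r\ge1$ be integers. For each $c>0$ define \[ \mathcal{L}_c:=\{X\in\mathbb{R}^{n\times r}:\ X_r\ge 0,\ \|X-I_{n\times r}\|_F\le c\,\|X_r-I_r\|_F\}. \] Then for each $c>0$ there exists $\delta>0$ such that for all $X\in\mathcal{L}_c$ with $\|X-I_{n\times r}\|_F\le\delta$, \[ \|X_r-I_r\|_F\le 2.1\sqrt{r}\,\|\sigma(X)-e\|. \]
   Context: For $X\in\mathbb{R}^{n\times r}$, $X_r$ denotes the $r\times r$ submatrix formed by the first $r$ rows of $X$, and $\sigma(X)\in\mathbb{R}^r$ is the vector of singular values of $X$ arranged in nonincreasing order. $I_{n\times r}$ is the $n\times r$ rectangular identity matrix (first $r$ rows form $I_r$, remaining rows zero), $e\in\mathbb{R}^r$ is the all-ones vector, $\|\cdot\|$ is the Euclidean norm, $\|\cdot\|_F$ the Frobenius norm, and $X_r\ge0$ means entrywise nonnegativity. *)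

(* Defs.v *)
From HB Require Import structures.
From mathcomp Require Import all_boot all_order all_algebra.
From mathcomp Require Import reals.
Set Implicit Arguments. Unset Strict Implicit. Unset Printing Implicit Defensive.
Import Order.TTheory GRing.Theory Num.Theory.
Local Open Scope ring_scope.

Definition frob (R : realType) m n (A : 'M[R]_(m, n)) : R :=
  Num.sqrt (\sum_(i < m) \sum_(j < n) A i j ^+ 2).

Definition vnorm (R : realType) n (v : 'rV[R]_n) : R :=
  Num.sqrt (\sum_(j < n) v 0 j ^+ 2).

Definition topr (R : realType) n r (H : (r <= n)%N) (X : 'M[R]_(n, r)) : 'M[R]_r :=
  \matrix_(i < r, j < r) X (widen_ord H i) j.

(* s is the vector sigma(X) of singular values of X (n x r, r <= n), in
   nonincreasing order: s is nonnegative, nonincreasing, and the squares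
   s_i^2 are the eigenvalues of X^T X counted with multiplicity. *)
Definition is_svals (R : realType) n r (X : 'M[R]_(n, r)) (s : 'rV[R]_r) : Prop :=
  [/\ forall i, 0 <= s 0 i,
      forall i j : 'I_r, (i <= j)%N -> s 0 j <= s 0 i &
      char_poly (X^T *m X) = \prod_(i < r) ('X - (s 0 i ^+ 2)%:P)].

Definition Lc (R : realType) n r (H : (r <= n)%N) (c : R) (X : 'M[R]_(n, r)) : Prop :=
  (forall i j, 0 <= topr H X i j) /\
  frob (X - pid_mx r) <= c * frob (topr H X - 1%:M).

(* Main.v *)
Require Import Defs.
From HB Require Import structures.
From mathcomp Require Import all_boot all_order all_algebra.
From mathcomp Require Import reals.
From mathcomp Require Import ring lra.
Import Order.TTheory GRing.Theory Num.Theory.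
Local Open Scope ring_scope.

Section CP.
Variable R : realType.

Lemma trace_eig r (N : 'M[R]_r) (a : 'I_r -> R) : (0 < r)%N ->
  char_poly N = \prod_(i < r) ('X - (a i)%:P) -> \tr N = \sum_i a i.
Proof.
move=> r0 H; have := char_poly_trace N r0; rewrite H.
have ->: \prod_(i < r) ('X - (a i)%:P) = \prod_(x <- map a (index_enum 'I_r)) ('X - x%:P).
  by rewrite big_map.
have sz : size (map a (index_enum 'I_r)) = r by rewrite size_map -[RHS]card_ord cardE /enum_mem /index_enum filter_predT ?unlock.
have := @coefPn_prod_XsubC _ (map a (index_enum 'I_r)).
rewrite sz -lt0n r0 => /(_ isT) h1 h2.
apply: oppr_inj; rewrite -h2 h1 big_map //.
Qed.

Lemma char_poly_opp r (N : 'M[R]_r) (a : 'I_r -> R) :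
  char_poly N = \prod_(i < r) ('X - (a i)%:P) ->
  \det ('X%:M + map_mx polyC N) = \prod_(i < r) ('X + (a i)%:P).
Proof.
move=> H.
have h1 := det_map_mx (comp_poly (- 'X)) (char_poly_mx N).
have e : map_mx (comp_poly (- 'X)) (char_poly_mx N) = - ('X%:M + map_mx polyC N).
  apply/matrixP => i j; rewrite !mxE.
  rewrite comp_polyB comp_polyC; case: (i == j) => /=.
    by rewrite mulr1n comp_polyX opprD.
  by rewrite mulr0n comp_poly0 add0r; ring.
rewrite e -scaleN1r detZ in h1.
have h2 : (char_poly N) \Po (- 'X) = (-1) ^+ r * \prod_(i < r) ('X + (a i)%:P).
  rewrite H rmorph_prod /= -[r in (-1) ^+ r]card_ord -prodrN.
  by apply: eq_bigr => i _; rewrite comp_polyB comp_polyX comp_polyC opprD.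
rewrite /char_poly -h1 in h2.
have := congr1 (fun x => (-1) ^+ r * x) h2.
by rewrite !mulrA -exprD -signr_odd oddD addbb /= expr0 !mul1r.
Qed.

Lemma char_poly_sq r (N : 'M[R]_r) (a : 'I_r -> R) :
  char_poly N = \prod_(i < r) ('X - (a i)%:P) ->
  char_poly (N *m N) = \prod_(i < r) ('X - (a i ^+ 2)%:P).
Proof.
move=> H.
have h1 := det_map_mx (comp_poly ('X ^+ 2)) (char_poly_mx (N *m N)).
have e : map_mx (comp_poly ('X ^+ 2)) (char_poly_mx (N *m N)) =
   char_poly_mx N *m ('X%:M + map_mx polyC N).
  have -> : char_poly_mx N *m ('X%:M + map_mx polyC N) =
      ('X ^+ 2)%:M - map_mx polyC (N *m N).
    rewrite /char_poly_mx mulmxBl !mulmxDr map_mxM -!scalar_mxM mul_mx_scalar mul_scalar_mx.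
    by rewrite opprD addrA addrK expr2.
  apply/matrixP => i j; rewrite !mxE.
  rewrite comp_polyB comp_polyC; case: (i == j) => /=.
    by rewrite !mulr1n comp_polyX.
  by rewrite !mulr0n comp_poly0.
rewrite e det_mulmx (@char_poly_opp r N a H) -/(char_poly N) H -big_split /= in h1.
apply/eqP; rewrite -subr_eq0 -(comp_poly_eq0 _ (q := 'X ^+ 2)); last first.
  by rewrite size_polyXn.
rewrite comp_polyB subr_eq0; apply/eqP.
rewrite /char_poly -h1 rmorph_prod /=; apply: eq_bigr => i _.
rewrite comp_polyB comp_polyX comp_polyC.
by rewrite polyCM mulrDr !mulrBl [_ * (a i)%:P]mulrC addrA subrK expr2.
Qed.
End CP.

Section Main.
Variable R : realType.

Definition sqs m n (B : 'M[R]_(m, n)) : R := \sum_(i < m) \sum_(j < n) B i j ^+ 2.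

Arguments sqs {m n}.

Lemma eqle (x y : R) : x = y -> x <= y. Proof. by move->. Qed.

Lemma sqs_ge0 {m n} (B : 'M[R]_(m, n)) : 0 <= sqs B.
Proof. by apply: sumr_ge0 => i _; apply: sumr_ge0 => j _; apply: sqr_ge0. Qed.

Lemma le_single (I : finType) (F : I -> R) j : (forall i, 0 <= F i) -> F j <= \sum_i F i.
Proof. by move=> h; rewrite (bigD1 j) //= lerDl sumr_ge0 // => i _. Qed.

Lemma sqrt_le_sq (x d : R) : 0 <= x -> Num.sqrt x <= d -> x <= d ^+ 2.
Proof.
move=> x0 h; have s0 := sqrtr_ge0 x; have := sqr_sqrtr x0.
move=> e; rewrite -e; nra.
Qed.

Lemma sqs_sub {m n} (B C : 'M[R]_(m, n)) : sqs (B - C) <= 2 * sqs B + 2 * sqs C.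
Proof.
rewrite /sqs !mulr_sumr -big_split /=; apply: ler_sum => i _.
rewrite !mulr_sumr -big_split /=; apply: ler_sum => j _; rewrite !mxE.
have := sqr_ge0 (B i j + C i j); nra.
Qed.

Lemma tr_sym {r} (N : 'M[R]_r) : N^T = N -> \tr (N *m N) = sqs N.
Proof.
move=> hN; rewrite /mxtrace /sqs; apply: eq_bigr => i _; rewrite mxE.
apply: eq_bigr => j _; rewrite expr2; congr (_ * _).
by rewrite -{1}hN mxE.
Qed.

Lemma sqs_tr {r} (A : 'M[R]_r) : sqs (A^T) = sqs A.
Proof. by rewrite /sqs exchange_big; apply: eq_bigr => i _; apply: eq_bigr => j _; rewrite mxE. Qed.

Lemma sqs_AAT {r} (A : 'M[R]_r) : (forall j k, j != k -> 0 <= A j k) ->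
  2 * sqs A <= sqs (A + A^T).
Proof.
move=> hA.
have e : sqs (A + A^T) = 2 * sqs A + 2 * \sum_j \sum_k (A j k * A k j).
  have e2 : 2 * sqs A = sqs A + sqs A^T by rewrite sqs_tr; ring.
  rewrite e2 /sqs -!big_split /= !mulr_sumr -!big_split /=; apply: eq_bigr => i _.
  rewrite !mulr_sumr -!big_split /=; apply: eq_bigr => j _; rewrite !mxE; ring.
rewrite e lerDl; apply: mulr_ge0 => //; apply: sumr_ge0 => j _; apply: sumr_ge0 => k _.
case: (eqVneq j k) => [->|jk]; first by rewrite -expr2 sqr_ge0.
by apply: mulr_ge0; apply: hA => //; rewrite eq_sym.
Qed.

Lemma sqs_Q {m r} (E : 'M[R]_(m, r)) : sqs (E^T *m E) <= (r%:R) ^+ 2 * (sqs E) ^+ 2.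
Proof.
set sE := sqs E.
have col : forall j, \sum_i E i j ^+ 2 <= sE.
  move=> j; apply: ler_sum => i _.
  by apply: (@le_single _ (fun l => E i l ^+ 2) j) => l; apply: sqr_ge0.
have hQ : forall j k, ((E^T *m E) j k) ^+ 2 <= sE ^+ 2.
  move=> j k; rewrite mxE.
  have e : \sum_i E^T j i * E i k = \sum_i (E i j * E i k).
    by apply: eq_bigr => i _; rewrite mxE.
  rewrite e.
  have h1 : \sum_i (2 * (E i j * E i k)) <= \sum_i (E i j ^+ 2 + E i k ^+ 2).
    by apply: ler_sum => i _; have := sqr_ge0 (E i j - E i k); nra.
  have h2 : \sum_i (- 2 * (E i j * E i k)) <= \sum_i (E i j ^+ 2 + E i k ^+ 2).
    by apply: ler_sum => i _; have := sqr_ge0 (E i j + E i k); nra.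
  rewrite -mulr_sumr big_split /= in h1; rewrite -mulr_sumr big_split /= in h2.
  have cj := col j; have ck := col k.
  set q := \sum_(i < m) E i j * E i k in h1 h2 *.
  have q1 : q <= sE by lra.
  have q2 : - sE <= q by lra.
  have : 0 <= (sE - q) * (sE + q) by apply: mulr_ge0; lra.
  move=> h; rewrite -subr_ge0; apply: le_trans h _; apply: eqle; ring.
apply: (@le_trans _ _ (\sum_(j < r) \sum_(k < r) sE ^+ 2)).
  by rewrite /sqs; apply: ler_sum => j _; apply: ler_sum => k _; apply: hQ.
rewrite !sumr_const card_ord -mulrnA -[sE ^+ 2 *+ _]mulr_natl natrM.
by apply: eqle; rewrite expr2; ring.
Qed.

End Main.

Section Num.
Variable R : realType.

Lemma numN1 (x rr : R) : 0 <= x -> 100 * x ^+ 2 <= 103 * rr -> 1 <= rr ->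
  100 * (x ^+ 2 - 1) ^+ 2 <= 406 * rr * (x - 1) ^+ 2.
Proof.
move=> x0 hx r1.
have h1 : 100 * (x + 1) ^+ 2 <= 406 * rr by have := sqr_ge0 (x - 1); nra.
have e : (x ^+ 2 - 1) ^+ 2 = (x - 1) ^+ 2 * (x + 1) ^+ 2 by ring.
rewrite e; have := sqr_ge0 (x - 1); nra.
Qed.

Lemma numN2 (rr trM tA tA2 sE d : R) : trM = rr + 2 * tA + sE ->
  200 * tA <= rr + 10000 * tA2 -> tA2 <= sE -> sE <= d ^+ 2 -> 100 * d <= 1 ->
  0 < d -> 1 <= rr -> 100 * trM <= 103 * rr.
Proof.
move=> e h1 h2 h3 h4 h5 h6.
have : 10000 * d ^+ 2 <= 1 by nra.
lra.
Qed.

Lemma numN3 (rr c d sA sE sQ sN sT w : R) : 2 * sA <= sT -> sT <= 2 * sN + 2 * sQ ->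
  sQ <= rr ^+ 2 * sE ^+ 2 -> sE <= d ^+ 2 -> sE <= c ^+ 2 * sA ->
  0 <= sE -> 0 <= sA -> 0 < c -> 0 < d -> 1 <= rr -> 100 * rr * c * d <= 1 ->
  100 * sN <= 406 * w -> 0 <= w -> 100 * sA <= 441 * w.
Proof.
move=> h1 h2 h3 h4 h5 h6 h7 h8 h9 h10 h11 h12 h13.
have a1 : sE ^+ 2 <= (c ^+ 2 * sA) * d ^+ 2.
  rewrite expr2; apply: ler_pM => //.
have a2 : 10000 * (rr * c * d) ^+ 2 <= 1.
  have : 0 <= rr * c * d by apply: mulr_ge0; [apply: mulr_ge0|]; lra.
  nra.
have a3 : rr ^+ 2 * sE ^+ 2 <= (rr * c * d) ^+ 2 * sA.
  have -> : (rr * c * d) ^+ 2 * sA = rr ^+ 2 * ((c ^+ 2 * sA) * d ^+ 2) by ring.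
  apply: ler_wpM2l => //; apply: exprn_ge0; lra.
have a4 : 10000 * ((rr * c * d) ^+ 2 * sA) <= sA.
  by rewrite mulrA; apply: ler_piMl => //; lra.
set u := (rr * c * d) ^+ 2 * sA in a3 a4.
lra.
Qed.
End Num.

Arguments sqs {R m n}.
Arguments sqs_ge0 {R m n}.
Arguments sqs_sub {R m n}.
Arguments tr_sym {R r}.
Arguments sqs_AAT {R r}.
Arguments sqs_tr {R r}.
Arguments sqs_Q {R m r}.
Arguments le_single {R I}.
Arguments sqrt_le_sq {R}.
Arguments numN1 {R}.
Arguments numN2 {R}.
Arguments numN3 {R}.
Arguments trace_eig {R r}.
Arguments char_poly_sq {R r}.
Arguments eqle {R}.

Theorem lemma3p1 (R : realType) (n r : nat) (Hr : (1 <= r)%N) (Hrn : (r <= n)%N) :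
  forall c : R, 0 < c ->
  exists delta : R, 0 < delta /\
    forall (X : 'M[R]_(n, r)), Lc Hrn c X ->
      frob (X - pid_mx r) <= delta ->
      forall s : 'rV[R]_r, is_svals X s ->
        frob (topr Hrn X - 1%:M) <=
          (21%:R / 10%:R) * Num.sqrt (r%:R) * vnorm (s - const_mx 1).
Proof.
move=> c c0.
set rr : R := r%:R.
have r1 : 1 <= rr by rewrite /rr ler1n.
have k0 : 0 < 100 * (1 + rr * c) by apply: mulr_gt0 => //; nra.
set d := (100 * (1 + rr * c))^-1.
have d0 : 0 < d by rewrite invr_gt0.
have dk : d * (100 * (1 + rr * c)) = 1 by rewrite mulVf // gt_eqF.
have d1 : 100 * d <= 1 by nra.
have d2 : 100 * rr * c * d <= 1 by nra.
exists d; split => // X [Hnn HL] HE s [s0 smono scp].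
set P : 'M[R]_(n, r) := pid_mx r.
set E := X - P.
set A := topr Hrn X - 1%:M.
have hA : forall j k, A j k = E (widen_ord Hrn j) k.
  by move=> j k; rewrite !mxE /= ltn_ord andbT.
have hPE : P^T *m E = A.
  apply/matrixP => j k; rewrite hA mxE /P tr_pid_mx.
  rewrite (bigD1 (widen_ord Hrn j)) //= big1.
    by rewrite !mxE /= eqxx ltn_ord mul1r addr0.
  move=> i hi; rewrite !mxE /=.
  have -> : (j == i :> nat) = false.
    by apply/negbTE; apply: contra hi => /eqP h; apply/eqP/val_inj.
  by rewrite mul0r.
have hX : X = E + P by rewrite /E subrK.
set Q := E^T *m E.
have hM : X^T *m X = 1%:M + A + A^T + Q.
  have hPP : P^T *m P = 1%:M.
    rewrite /P tr_pid_mx mul_pid_mx minnn.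
    have -> : minn n r = r by apply/minn_idPr.
    by rewrite pid_mx_1.
  have key : forall E' : 'M[R]_(n, r), P^T *m E' = A ->
      (E' + P)^T *m (E' + P) = 1%:M + A + A^T + E'^T *m E'.
    move=> E' hPE'.
    have hEP : E'^T *m P = A^T by rewrite -hPE' trmx_mul trmxK.
    have tD : (E' + P)^T = E'^T + P^T by apply/matrixP => i j; rewrite !mxE.
    rewrite tD mulmxDl !mulmxDr hPP hEP hPE'.
    apply/matrixP => i j; rewrite !mxE; ring.
  by rewrite {1 2}hX key.
set M := X^T *m X.
set N := M - 1%:M.
have hN : N = A + A^T + Q.
  by apply/matrixP => i j; rewrite /N /M hM !mxE; ring.
have hQT : Q^T = Q by rewrite /Q trmx_mul trmxK.
have hNT : N^T = N.
  have symL : forall A' Q' : 'M[R]_r, Q'^T = Q' -> (A' + A'^T + Q')^T = A' + A'^T + Q'.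
    move=> A' Q' hq; rewrite !(raddfD (@trmx R r r)) /= trmxK hq.
    by congr (_ + _); rewrite addrC.
  by rewrite hN symL.
have trM : \tr M = \sum_i s 0 i ^+ 2 by apply: trace_eig.
have trMM : \tr (M *m M) = \sum_i (s 0 i ^+ 2) ^+ 2.
  by apply: trace_eig => //; apply: char_poly_sq.
have trNN0 : \tr (N *m N) = \tr (M *m M) - \tr M - (\tr M - \tr (1%:M : 'M[R]_r)).
  by rewrite /N mulmxBl !mulmxBr mul1mx !mulmx1 !(raddfB (@mxtrace R r)).
have t1 : \tr (1%:M : 'M[R]_r) = rr by rewrite mxtrace1.
have trNN : \tr (N *m N) = \tr (M *m M) - 2 * \tr M + rr by rewrite trNN0 t1; ring.
have trQ : \tr Q = sqs E.
  rewrite /mxtrace /sqs exchange_big; apply: eq_bigr => j _; rewrite !mxE.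
  by apply: eq_bigr => i _; rewrite !mxE expr2.
have trM2 : \tr M = rr + 2 * \tr A + sqs E.
  have gen : forall A' Q' : 'M[R]_r,
      \tr (1%:M + A' + A'^T + Q') = rr + 2 * \tr A' + \tr Q'.
    by move=> A' Q'; rewrite !mxtraceD mxtrace_tr t1; ring.
  by rewrite /M hM gen trQ.
have tA2 : \sum_j A j j ^+ 2 <= sqs E.
  rewrite /sqs exchange_big; apply: ler_sum => j _; rewrite hA.
  exact: (le_single (fun i => E i j ^+ 2) (widen_ord Hrn j) (fun i => sqr_ge0 _)).
have htA : 200 * \tr A <= rr + 10000 * \sum_j A j j ^+ 2.
  have : \sum_j (200 * A j j) <= \sum_j (1 + 10000 * A j j ^+ 2).
    by apply: ler_sum => j _; have := sqr_ge0 (100 * A j j - 1); nra.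
  by rewrite -mulr_sumr big_split /= -mulr_sumr sumr_const card_ord.
have sEd : sqs E <= d ^+ 2 := sqrt_le_sq _ _ (sqs_ge0 E) HE.
have sEc : sqs E <= c ^+ 2 * sqs A.
  have := sqrt_le_sq _ _ (sqs_ge0 E) HL.
  by rewrite exprMn /frob sqr_sqrtr //; apply: sqs_ge0.
have trMb : 100 * \tr M <= 103 * rr.
  by apply: (numN2 _ _ _ _ _ d trM2 htA tA2 sEd d1 d0 r1).
have si : forall i, 100 * s 0 i ^+ 2 <= 103 * rr.
  move=> i; apply: le_trans trMb; rewrite trM ler_pM2l //.
  exact: (le_single (fun j => s 0 j ^+ 2) i (fun j => sqr_ge0 _)).
set Sv := \sum_j (s 0 j - 1) ^+ 2.
have Sv0 : 0 <= Sv by apply: sumr_ge0 => j _; apply: sqr_ge0.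
have sNe : sqs N = \sum_i (s 0 i ^+ 2 - 1) ^+ 2.
  rewrite -(tr_sym N hNT) trNN trMM trM.
  have -> : \sum_i (s 0 i ^+ 2 - 1) ^+ 2 =
     \sum_i ((s 0 i ^+ 2) ^+ 2 + (- 2 * s 0 i ^+ 2 + 1)).
    by apply: eq_bigr => i _; ring.
  by rewrite big_split big_split /= -mulr_sumr sumr_const card_ord; ring.
have sNb : 100 * sqs N <= 406 * (rr * Sv).
  rewrite sNe /Sv mulr_sumr mulrA mulr_sumr; apply: ler_sum => i _.
  exact: (numN1 (s 0 i) rr (s0 i) (si i) r1).
have hT : 2 * sqs A <= sqs (A + A^T).
  apply: sqs_AAT => j k jk.
  rewrite /A !mxE (negbTE jk) subr0.
  by have := Hnn j k; rewrite mxE.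
have hTN : A + A^T = N - Q by rewrite hN addrK.
have sT : sqs (A + A^T) <= 2 * sqs N + 2 * sqs Q by rewrite hTN; apply: sqs_sub.
have sQ : sqs Q <= rr ^+ 2 * sqs E ^+ 2 := sqs_Q E.
have fin : 100 * sqs A <= 441 * (rr * Sv).
  apply: (numN3 rr c d _ (sqs E) (sqs Q) (sqs N) (sqs (A + A^T))) => //.
  - exact: sqs_ge0.
  - exact: sqs_ge0.
  - by apply: mulr_ge0 => //; lra.
have ev : vnorm (s - const_mx 1) = Num.sqrt Sv.
  by rewrite /vnorm /Sv; congr Num.sqrt; apply: eq_bigr => j _; rewrite !mxE.
rewrite ev; change (Num.sqrt (sqs A) <= 21%:R / 10%:R * Num.sqrt rr * Num.sqrt Sv).
have y0 : 0 <= 21%:R / 10%:R * Num.sqrt rr * Num.sqrt Sv.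
  apply: mulr_ge0; [apply: mulr_ge0; [by rewrite divr_ge0 ?ler0n | exact: sqrtr_ge0] | exact: sqrtr_ge0].
have y2 : (21%:R / 10%:R * Num.sqrt rr * Num.sqrt Sv) ^+ 2 = 441 / 100 * (rr * Sv).
  by rewrite !exprMn !sqr_sqrtr //; field.
rewrite -(ger0_norm y0) -sqrtr_sqr; apply: ler_wsqrtr; rewrite y2; lra.
Qed.
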